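(* Let $(X_n)_{n\ge0}$ be a time-homogeneous Markov chain on $(S,\mathcal S)$ with $m$-step transition probabilities $\mathsf P_x(m,\cdot)$, fix $m\ge1$, and let $V^{(m)}$ be the operator on bounded measurable functions $h$ on $S^2=S\times S$ defined by $$V^{(m)}h(x^1,x^2):=\big(1-\alpha^{(m)}(x^1,x^2)\big)\int_{S^2}h(y)\,K^{(m)}\big((x^1,x^2),dy\big),$$ with operator norm $\|V^{(m)}\|$ taken with respect to the supremum norm. Then for all $x^1,x^2\in S$ and all $n\ge0$, $$\tfrac12\,\|\mu^{x^1}_{nm}-\mu^{x^2}_{nm}\|_{TV}\le\|V^{(m)}\|^n,$$ where $\mu^x_k=\mathsf P_x(k,\cdot)$.
   Context: $S$ is a non-empty topological space with Borel $\sigma$-algebra $\mathcal S$. For $x^1,x^2\in S$, $\alpha^{(m)}(x^1,x^2):=\int\big(\frac{\mathsf P_{x^2}(m,dy)}{\mathsf P_{x^1}(m,dy)}\wedge1\big)\mathsf P_{x^1}(m,dy)$ (ratio = density of the absolutely continuous part), i.e. the total mass of $\mathsf P_{x^1}(m,\cdot)\wedge\mathsf P_{x^2}(m,\cdot)$; note $\alpha^{(m)}(x,x)=1$. $K^{(m)}$ is the $m$-step Markov coupling kernel on $S^2$: from $(x^1,x^2)$ with $x^1\ne x^2$ and $\alpha:=\alpha^{(m)}(x^1,x^2)\in(0,1)$, with probability $\alpha$ both coordinates move to a common point with law $(\mathsf P_{x^1}(m,\cdot)\wedge\mathsf P_{x^2}(m,\cdot))/\alpha$, and with probability $1-\alpha$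 they move independently with laws $(\mathsf P_{x^i}(m,\cdot)-\mathsf P_{x^1}(m,\cdot)\wedge\mathsf P_{x^2}(m,\cdot))/(1-\alpha)$, $i=1,2$ (in the degenerate cases $\alpha\in\{0,1\}$ the corresponding branch is omitted); from a diagonal point $(x,x)$ both coordinates move together with law $\mathsf P_x(m,\cdot)$. $\|\mu-\nu\|_{TV}:=\sup_{A\in\mathcal S}|\mu(A)-\nu(A)|$. *)

(* Defs.v *)
From HB Require Import structures.
From mathcomp Require Import all_boot all_order all_algebra.
From mathcomp Require Import all_classical all_reals all_analysis measurable_realfun.
Set Implicit Arguments. Unset Strict Implicit. Unset Printing Implicit Defensive.
Import Order.TTheory GRing.Theory Num.Theory.
Import numFieldNormedType.Exports.
Local Open Scope classical_set_scope.
Local Open Scope ring_scope.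

Notation Borel T := (g_sigma_algebraType (@open T)).

Section coupling.
Context d (S : measurableType d) (R : realType).
Local Open Scope ereal_scope.

(* lambda = mu1 + mu2, a finite measure dominating mu1 and mu2 *)
Section lam.
Variables (mu1 mu2 : probability S R).
Definition lam : set S -> \bar R := measure_add mu1 mu2.
HB.instance Definition _ := Measure.on lam.
Let lam_fin : fin_num_fun lam.
Proof.
move=> A mA; rewrite /lam measure_addE fin_numD.
by rewrite !fin_num_measure.
Qed.
HB.instance Definition _ := @Measure_isFinite.Build _ S R lam lam_fin.
End lam.

Definition dens1 (mu1 mu2 : probability S R) : S -> \bar R :=
  Radon_Nikodym (charge_of_finite_measure mu1) (lam mu1 mu2).
Definition dens2 (mu1 mu2 : probability S R) : S -> \bar R :=
  Radon_Nikodym (charge_of_finite_measure mu2) (lam mu1 mu2).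

(* density of mu1 /\ mu2 w.r.t. lambda *)
Definition mindens (mu1 mu2 : probability S R) (y : S) : \bar R :=
  mine (dens1 mu1 mu2 y) (dens2 mu1 mu2 y).

Definition overlap (mu1 mu2 : probability S R) : \bar R :=
  \int[lam mu1 mu2]_y mindens mu1 mu2 y.

Definition alpha (P : nat -> S -> probability S R) (m : nat) (x1 x2 : S) :=
  overlap (P m x1) (P m x2).

(* Integral of h against the coupling law of (mu1, mu2) for x1 <> x2:
   with prob. alpha both coordinates equal, law (mu1/\mu2)/alpha;
   with prob. 1-alpha independent with laws (mu_i - mu1/\mu2)/(1-alpha).
   (In the degenerate cases alpha in {0,1} the corresponding term vanishes:
   the mass of mu1/\mu2 is 0, resp. 1/(1-alpha) is 0 by MathComp convention
   and the remaining measures are 0.) *)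
Definition coupling_int (mu1 mu2 : probability S R) (h : S * S -> R) : \bar R :=
  let la := lam mu1 mu2 in
  let g := mindens mu1 mu2 in
  let f1 := dens1 mu1 mu2 in
  let f2 := dens2 mu1 mu2 in
  let a := overlap mu1 mu2 in
  (\int[la]_y ((h (y, y))%:E * g y)) +
  ((fine (1 - a))^-1)%:E *
    \int[la]_y1 \int[la]_y2 ((h (y1, y2))%:E * (f1 y1 - g y1) * (f2 y2 - g y2)).

(* \int h(y) K^(m)((x1,x2), dy) *)
Definition Kint (P : nat -> S -> probability S R) (m : nat) (h : S * S -> R)
  (z : S * S) : \bar R :=
  if pselect (z.1 = z.2) then \int[P m z.1]_y (h (y, y))%:E
  else coupling_int (P m z.1) (P m z.2) h.

Definition Vop (P : nat -> S -> probability S R) (m : nat) (h : S * S -> R)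
  (z : S * S) : \bar R :=
  (1 - alpha P m z.1 z.2) * Kint P m h z.

Definition Vnorm (P : nat -> S -> probability S R) (m : nat) : \bar R :=
  ereal_sup [set e | exists (h : S * S -> R) (z : S * S),
    [/\ measurable_fun [set: S * S] h, (forall w, `|h w| <= 1)%R &
        e = `|Vop P m h z| ] ].

Definition tv (mu nu : probability S R) : \bar R :=
  ereal_sup [set `|mu A - nu A| | A in [set A : set S | measurable A]].

End coupling.

(* Main.v *)
Require Import Defs.
From HB Require Import structures.
From mathcomp Require Import all_boot all_order all_algebra.
From mathcomp Require Import all_classical all_reals all_analysis measurable_realfun.
From mathcomp Require Import lra ring.
Set Implicit Arguments. Unset Strict Implicit. Unset Printing Implicit Defensive.
Import Order.TTheory GRing.Theory Num.Theory.
Import numFieldNormedType.Exports.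
Local Open Scope classical_set_scope.
Local Open Scope ring_scope.


Lemma bnd d (S : measurableType d) (R : realType) (f : S -> R) M :
  (forall x, `|f x| <= M) -> [bounded f x | x in setT].
Proof.
move=> fM; exists M; split; first by rewrite num_real.
move=> N /ltW MN y _ /=; exact: le_trans (fM y) MN.
Qed.
Section L.
Context d (S : measurableType d) (R : realType).
Variables (mu nu : probability S R).
Local Notation la := (lam mu nu).
Definition pp y := fine (dens1 mu nu y).
Definition qq y := fine (dens2 mu nu y).
Definition gg y := Num.min (pp y) (qq y).

Lemma mu_dom : mu `<< la.
Proof.
move=> N N0 A mA AN; have := N0 A mA AN.
rewrite /lam measure_addE => /eqP; rewrite padde_eq0 // => /andP[/eqP -> _] //.
Qed.
Lemma nu_dom : nu `<< la.
Proof.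
move=> N N0 A mA AN; have := N0 A mA AN.
rewrite /lam measure_addE => /eqP; rewrite padde_eq0 // => /andP[_ /eqP ->] //.
Qed.

Lemma dens1E y : dens1 mu nu y = (pp y)%:E.
Proof. by rewrite /pp fineK // /dens1 Radon_Nikodym_fin_num //; exact: mu_dom. Qed.
Lemma dens2E y : dens2 mu nu y = (qq y)%:E.
Proof. by rewrite /qq fineK // /dens2 Radon_Nikodym_fin_num //; exact: nu_dom. Qed.
Lemma mindensE y : mindens mu nu y = (gg y)%:E.
Proof. by rewrite /mindens dens1E dens2E /gg EFin_min. Qed.

Lemma int_pp : la.-integrable setT (EFin \o pp).
Proof.
apply: (eq_integrable _ (dens1 mu nu)) => //; first by move=> y _; rewrite dens1E.
rewrite /dens1; apply: Radon_Nikodym_integrable; exact: mu_dom.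
Qed.
Lemma int_qq : la.-integrable setT (EFin \o qq).
Proof.
apply: (eq_integrable _ (dens2 mu nu)) => //; first by move=> y _; rewrite dens2E.
rewrite /dens2; apply: Radon_Nikodym_integrable; exact: nu_dom.
Qed.

Lemma mes_pp : measurable_fun setT pp.
Proof. exact/measurable_EFinP/(measurable_int _ int_pp). Qed.
Lemma mes_qq : measurable_fun setT qq.
Proof. exact/measurable_EFinP/(measurable_int _ int_qq). Qed.
Lemma mes_gg : measurable_fun setT gg.
Proof. exact: measurable_minr mes_pp mes_qq. Qed.

Lemma int_gg : la.-integrable setT (EFin \o gg).
Proof.
have H : la.-integrable setT (EFin \o (fun y => `|pp y| + `|qq y|)).
  apply: (eq_integrable _ ((EFin \o (Num.norm \o pp)) \+ (EFin \o (Num.norm \o qq)))) => //.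
  apply: integrableD => //; apply: integrable_norm; [exact: int_pp|exact: int_qq].
apply: (le_integrable _ _ _ H) => //.
- exact/measurable_EFinP/mes_gg.
- move=> y _ /=; rewrite lee_fin [X in _ <= X]ger0_norm ?addr_ge0 //.
  rewrite /gg /Num.min; case: ifP => _.
  + by rewrite lerDl.
  + by rewrite lerDr.
Qed.

Lemma int1 : (\int[la]_x (pp x)%:E = 1)%E.
Proof.
have := @Radon_Nikodym_integral _ _ _ (charge_of_finite_measure mu) la setT mu_dom measurableT.
rewrite /= probability_setT => ->; apply: eq_integral => y _; by rewrite -dens1E.
Qed.
Lemma int2 : (\int[la]_x (qq x)%:E = 1)%E.
Proof.
have := @Radon_Nikodym_integral _ _ _ (charge_of_finite_measure nu) la setT nu_dom measurableT.
rewrite /= probability_setT => ->; apply: eq_integral => y _; by rewrite -dens2E.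
Qed.

Lemma Rint1 : \int[la]_x pp x = 1.
Proof. by rewrite /Rintegral int1. Qed.
Lemma Rint2 : \int[la]_x qq x = 1.
Proof. by rewrite /Rintegral int2. Qed.

Definition aa := \int[la]_x gg x.

Lemma overlapE : overlap mu nu = aa%:E.
Proof.
rewrite /overlap /aa /Rintegral fineK; last exact: integrable_fin_num int_gg.
by apply: eq_integral => y _; rewrite mindensE.
Qed.

Lemma int_pg : la.-integrable setT (EFin \o (fun y => pp y - gg y)).
Proof. apply: (eq_integrable _ (fun y => (pp y)%:E - (gg y)%:E)%E) => //. 
apply: integrableB => //; [exact: int_pp|exact: int_gg]. Qed.
Lemma int_qg : la.-integrable setT (EFin \o (fun y => qq y - gg y)).
Proof. apply: (eq_integrable _ (fun y => (qq y)%:E - (gg y)%:E)%E) => //. 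
apply: integrableB => //; [exact: int_qq|exact: int_gg]. Qed.

Lemma Rint_pg : \int[la]_x (pp x - gg x) = 1 - aa.
Proof. by rewrite RintegralB //; [rewrite Rint1|exact: int_pp|exact: int_gg]. Qed.
Lemma Rint_qg : \int[la]_x (qq x - gg x) = 1 - aa.
Proof. by rewrite RintegralB //; [rewrite Rint2|exact: int_qq|exact: int_gg]. Qed.


Lemma pg y : 0 <= pp y - gg y.
Proof. by rewrite subr_ge0 /gg ge_min lexx. Qed.
Lemma qg y : 0 <= qq y - gg y.
Proof. by rewrite subr_ge0 /gg ge_min lexx orbT. Qed.

Section F.
Variables (f : S -> R) (c s : R).
Hypothesis mf : measurable_fun setT f.
Hypothesis fcs : forall y, c <= f y <= c + s.

Let fM y : `|f y| <= `|c| + `|c + s|.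
Proof.
have := fcs y; case/andP => h1 h2.
have := ler_norml c `|c|; rewrite lexx => /esym/andP[h3 _].
have := ler_norml (c + s) `|c + s|; rewrite lexx => /esym/andP[_ h4].
have h5 := normr_ge0 (c + s); have h6 := normr_ge0 c.
rewrite ler_norml; apply/andP; split; lra.
Qed.

Let intfM k : la.-integrable setT (EFin \o k) ->
  la.-integrable setT (EFin \o (fun y => f y * k y)).
Proof.
move=> ik; apply: (eq_integrable _ ((EFin \o f) \* (EFin \o k))%E) => //.
apply: integrableMr => //; exact: bnd fM.
Qed.

Let chv (m : probability S R) : m `<< la ->
  \int[m]_x f x = \int[la]_x (f x * fine (Radon_Nikodym (charge_of_finite_measure m) la x)).
Proof.
move=> mla.
have im : m.-integrable setT (EFin \o f).
  apply: measurable_bounded_integrable => //; last exact: bnd fM.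
  exact: (le_lt_trans (probability_le1 m measurableT) (ltry 1)).
have := Radon_Nikodym_change_of_variables mla measurableT im.
rewrite /Rintegral => <-; congr fine; apply: eq_integral => y _.
by rewrite /= EFinM fineK // Radon_Nikodym_fin_num.
Qed.

Lemma contract : `|\int[mu]_x f x - \int[nu]_x f x| <= s * (1 - aa).
Proof.
have c1 : \int[mu]_x f x = \int[la]_x (f x * pp x) by exact: chv mu mu_dom.
have c2 : \int[nu]_x f x = \int[la]_x (f x * qq x) by exact: chv nu nu_dom.
have E1 : \int[la]_x (f x * pp x) =
   \int[la]_x (f x * (pp x - gg x)) + \int[la]_x (f x * gg x).
  rewrite -RintegralD //; [|exact: intfM int_pg|exact: intfM int_gg].
  by apply: eq_Rintegral => y _; rewrite -mulrDr subrK.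
have E2 : \int[la]_x (f x * qq x) =
   \int[la]_x (f x * (qq x - gg x)) + \int[la]_x (f x * gg x).
  rewrite -RintegralD //; [|exact: intfM int_qg|exact: intfM int_gg].
  by apply: eq_Rintegral => y _; rewrite -mulrDr subrK.
have B (k : S -> R) : (forall y, 0 <= k y) -> la.-integrable setT (EFin \o k) ->
   \int[la]_x k x = 1 - aa ->
   c * (1 - aa) <= \int[la]_x (f x * k x) <= (c + s) * (1 - aa).
  move=> k0 ik kE; apply/andP; split.
  - rewrite -kE -RintegralZl //; apply: le_Rintegral => //.
    + by apply: (eq_integrable _ (fun y => c%:E * (k y)%:E)%E) => //; apply: integrableZl.
    + exact: intfM.
    + move=> y _; apply: ler_wpM2r => //; by case/andP: (fcs y).
  - rewrite -kE -RintegralZl //; apply: le_Rintegral => //.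
    + exact: intfM.
    + by apply: (eq_integrable _ (fun y => (c + s)%:E * (k y)%:E)%E) => //; apply: integrableZl.
    + move=> y _; apply: ler_wpM2r => //; by case/andP: (fcs y).
have /andP[b1 b2] := B _ pg int_pg Rint_pg.
have /andP[b3 b4] := B _ qg int_qg Rint_qg.
rewrite c1 c2 E1 E2.
move: b1 b2 b3 b4; rewrite mulrDl.
rewrite ler_norml; set u := c * _; set v := s * _; move=> b1 b2 b3 b4.
apply/andP; split; lra.
Qed.
End F.

Lemma eint_pg : (\int[la]_x (pp x - gg x)%:E = (1 - aa)%:E)%E.
Proof. by rewrite -Rint_pg /Rintegral fineK //; exact: integrable_fin_num int_pg. Qed.
Lemma eint_qg : (\int[la]_x (qq x - gg x)%:E = (1 - aa)%:E)%E.
Proof. by rewrite -Rint_qg /Rintegral fineK //; exact: integrable_fin_num int_qg. Qed.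

Lemma coup1 : coupling_int mu nu (fun _ => 1) = 1%:E.
Proof.
rewrite /coupling_int -/la overlapE.
have -> : (\int[la]_y ((1:R)%:E * mindens mu nu y) = aa%:E)%E.
  rewrite /aa /Rintegral fineK; last exact: integrable_fin_num int_gg.
  by apply: eq_integral => y _; rewrite mul1e mindensE.
have -> : (\int[la]_y1 \int[la]_y2 ((1:R)%:E * (dens1 mu nu y1 - mindens mu nu y1) *
     (dens2 mu nu y2 - mindens mu nu y2)) = ((1 - aa) * (1 - aa))%:E)%E.
  transitivity (\int[la]_y1 ((pp y1 - gg y1)%:E * (1 - aa)%:E))%E.
    apply: eq_integral => y1 _.
    transitivity (\int[la]_y2 ((pp y1 - gg y1)%:E * (qq y2 - gg y2)%:E))%E.
      by apply: eq_integral => y2 _; rewrite mul1e dens1E dens2E !mindensE.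
    by rewrite integralZl //; [rewrite eint_qg | exact: int_qg].
  by rewrite integralZr //; [rewrite eint_pg | exact: int_pg].
rewrite -EFinB /= -EFinM -EFinD; congr EFin.
have [h|h] := eqVneq (1 - aa) 0.
  by rewrite h invr0 mul0r addr0; lra.
by rewrite mulrA mulVf // mul1r; ring.
Qed.
End L.

Lemma aa_same d (S : measurableType d) (R : realType) (mu : probability S R) :
  aa mu mu = 1.
Proof.
rewrite /aa -(Rint1 mu mu); apply: eq_Rintegral => y _.
by rewrite /gg /qq /pp /dens2 /dens1 minxx.
Qed.

Lemma Vlow d (S : measurableType d) (R : realType) (P : nat -> S -> probability S R) m x y :
  ((1 - aa (P m x) (P m y))%:E <= Vnorm P m)%E.
Proof.
case: (pselect (x = y)) => [<-|xy].
  rewrite aa_same subrr.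
  apply: (le_trans (abse_ge0 (Vop P m (fun _ => 0) (x, x)))).
  apply: ereal_sup_ubound; exists (fun _ => 0), (x, x); split => //.
  by move=> w; rewrite normr0.
have H : (`|Vop P m (fun _ => 1%R) (x, y)| <= Vnorm P m)%E.
  apply: ereal_sup_ubound; exists (fun _ => 1%R), (x, y); split => //.
  by move=> w; rewrite normr1.
apply: (le_trans _ H).
rewrite /Vop /alpha /Kint /=; destruct (pselect (x = y)) as [e|ne]; first by case: xy.
rewrite coup1 overlapE mule1 -EFinB /= lee_fin.
exact: ler_norm.
Qed.

Unset Implicit Arguments.
Set Strict Implicit.

Theorem corollary1 (R : realType) (T : ptopologicalType)
  (P : nat -> Borel T -> probability (Borel T) R)
  (P_meas : forall k (A : set (Borel T)), measurable A ->
     measurable_fun [set: Borel T] (fun x => P k x A : \bar R))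
  (P_0 : forall x (A : set (Borel T)), measurable A -> P 0%N x A = \d_x A)
  (P_CK : forall k l x (A : set (Borel T)), measurable A ->
     P (k + l)%N x A = (\int[P k x]_y P l y A)%E)
  (m : nat) (m_gt0 : (0 < m)%N) (x1 x2 : Borel T) (n : nat) :
  ((2^-1)%:E * tv (P (n * m)%N x1) (P (n * m)%N x2) <= Vnorm P m ^+ n)%E.
Proof.
have Pf k y A : measurable A -> 0 <= fine (P k y A) <= 1.
  move=> mA; have h0 := measure_ge0 (P k y) A; have h1 := probability_le1 (P k y) mA.
  rewrite -(fineK (fin_num_measure (P k y) A mA)) lee_fin in h0.
  rewrite -(fineK (fin_num_measure (P k y) A mA)) lee_fin in h1.
  by rewrite h0 h1.
have tvle k (B : R) : (forall y y' A, measurable A ->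
    `|fine (P k y A) - fine (P k y' A)| <= B) -> (tv (P k x1) (P k x2) <= B%:E)%E.
  move=> H; apply: ge_ereal_sup => e [A mA <-].
  rewrite -(fineK (fin_num_measure (P k x1) A mA)) -(fineK (fin_num_measure (P k x2) A mA)).
  by rewrite -EFinB /= lee_fin; exact: H.
have rho0 : (0 <= Vnorm P m)%E.
  by have := Vlow P m x1 x1; rewrite aa_same subrr.
move: rho0; case E: (Vnorm P m) => [r| |] // r0.
- have r0' : 0 <= r by rewrite -lee_fin.
  have C : forall n y y' A, measurable A ->
      `|fine (P (n * m)%N y A) - fine (P (n * m)%N y' A)| <= r ^+ n.
    elim=> [|k IH] y y' A mA.
      rewrite mul0n !P_0 // !diracE /= expr0.
      by case: (y \in A); case: (y' \in A); rewrite /= ?subrr ?normr0 ?subr0 ?sub0r ?normrN ?normr1.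
    rewrite mulSn !P_CK //.
    pose F := fun z => fine (P (k * m)%N z A).
    have eF x : (\int[P m x]_z P (k * m)%N z A = \int[P m x]_z (F z)%:E)%E.
      by apply: eq_integral => z _; rewrite /F fineK // fin_num_measure.
    rewrite !eF.
    change (`|Rintegral (P m y) setT F - Rintegral (P m y') setT F| <= r ^+ k.+1).
    have mF : measurable_fun setT F.
      exact: measurableT_comp (fine_measurable measurableT) (P_meas _ _ mA).
    have lb : has_lbound (range F).
      exists 0%R. move=> _ [z _ <-]. by case/andP: (Pf (k * m)%N z A mA).
    have Fc z : inf (range F) <= F z <= inf (range F) + r ^+ k.
      apply/andP; split; first by apply: (ge_inf lb); exists z.
      rewrite -lerBlDr; apply: lb_le_inf; first by exists (F z), z.
      move=> _ [z' _ <-]; have := IH z z' A mA; rewrite ler_norml => /andP[h1 h2].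
      rewrite /F; lra.
    apply: le_trans (contract (P m y) (P m y') mF Fc) _.
    rewrite exprSr; apply: ler_wpM2l; first exact: exprn_ge0.
    by have := Vlow P m y y'; rewrite E lee_fin.
  rewrite -EFin_expe.
  apply: le_trans (lee_wpmul2l _ (tvle _ _ (C n))) _; first by rewrite lee_fin.
  rewrite -EFinM lee_fin; have := exprn_ge0 n r0'; lra.
- have t1 : (tv (P (n * m)%N x1) (P (n * m)%N x2) <= 1%:E)%E.
    apply: tvle => y y' A mA.
    case/andP: (Pf (n * m)%N y A mA) => a1 a2; case/andP: (Pf (n * m)%N y' A mA) => a3 a4.
    rewrite ler_norml; apply/andP; split; lra.
  apply: le_trans (lee_wpmul2l _ t1) _; first by rewrite lee_fin.
  rewrite -EFinM mulr1.
  have : (1 <= +oo ^+ n :> \bar R)%E.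
    elim: n {t1} => [|k IH]; first by rewrite expe0.
    rewrite expeS; have -> : (1 = 1 * 1 :> \bar R)%E by rewrite mule1.
    by apply: lee_pmul => //; rewrite leey.
  apply: le_trans; rewrite lee_fin; lra.
Qed.
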